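(* Let $\Sigma$ be a $\delta$-set and let $s=\max\Sigma$. Then $|\Sigma|\ge\lceil (s+1)/2\rceil$.
   Context: All graphs are finite and simple; $d(u,v)$ denotes the usual graph distance (infinite between different components). For a set $J$ of nonnegative integers, a distance $J$-labeling of $G$ is a function $f:V(G)\to J$ with $f(V(G))=J$ such that whenever two distinct vertices $u,v$ satisfy $f(u)=f(v)=k$, we have $d(u,v)=k$. It is proper if every $k\in J\setminus\{0\}$ is the label of at least two vertices. A finite nonempty set $\Sigma$ of nonnegative integers is a $\delta$-set if there exists a graph admitting a proper distance $\Sigma$-labeling. *)

(* Defs.v *)
From mathcomp Require Import all_boot.
Set Implicit Arguments. Unset Strict Implicit. Unset Printing Implicit Defensive.

Definition simple_graph (T : finType) (e : rel T) : Prop :=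
  symmetric e /\ irreflexive e.

(* d(u,v) = k : there is a walk of length k from u to v and none shorter.
   (If u, v lie in different components no k satisfies this, i.e. d = oo.) *)
Definition graph_dist (T : finType) (e : rel T) (u v : T) (k : nat) : Prop :=
  (exists p : seq T, [/\ path e u p, last u p = v & size p = k]) /\
  (forall p : seq T, path e u p -> last u p = v -> k <= size p).

(* J is represented as a duplicate-free list of naturals. *)
Definition distance_labeling (T : finType) (e : rel T) (J : seq nat)
  (f : T -> nat) : Prop :=
  [/\ forall v, f v \in J,
      forall k, k \in J -> exists v, f v = k &
      forall u v k, u != v -> f u = k -> f v = k -> graph_dist e u v k].

Definition proper_distance_labeling (T : finType) (e : rel T) (J : seq nat)
  (f : T -> nat) : Prop :=
  distance_labeling e J f /\
  forall k, k \in J -> k != 0 -> exists u v, [/\ u != v, f u = k & f v = k].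

Definition delta_set (Sigma : seq nat) : Prop :=
  uniq Sigma /\ Sigma != [::] /\
  exists (T : finType) (e : rel T) (f : T -> nat),
    simple_graph e /\ proper_distance_labeling e Sigma f.

(* Main.v *)
Require Import Defs.
From mathcomp Require Import all_boot.
From mathcomp Require Import zify.

Lemma max_in (S : seq nat) : \max_(k <- S) k = 0 \/ \max_(k <- S) k \in S.
Proof.
elim: S => [|x t IH]; first by left; rewrite big_nil.
rewrite big_cons; right.
move: IH; set m := \max_(k <- t) k => IH.
rewrite in_cons /maxn; case: ltnP => H.
  by case: IH => E; [rewrite E in H | rewrite E orbT].
by rewrite eqxx.
Qed.

Section Seg.
Variables (T : finType) (e : rel T) (u v : T) (p : seq T) (s : nat).
Hypotheses (Hp : path e u p) (Hl : last u p = v) (Hs : size p = s)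
  (Hmin : forall q, path e u q -> last u q = v -> s <= size q).

Let x i := last u (take i p).

Lemma splice i j r : i <= j <= s -> path e (x i) r -> last (x i) r = x j ->
  j - i <= size r.
Proof.
move=> /andP[Hij Hjs] Hr Hlr.
have := Hmin (take i p ++ r ++ drop j p).
rewrite !cat_path take_path //= Hr /= Hlr !last_cat Hlr.
have Hd : path e (x j) (drop j p).
  by move: Hp; rewrite -{1}(cat_take_drop j p) cat_path => /andP[].
rewrite Hd /x -last_cat cat_take_drop Hl => /(_ isT erefl).
rewrite !size_cat size_drop size_takel; lia.
Qed.

Lemma segment i j : i <= j <= s ->
  exists r, [/\ path e (x i) r, last (x i) r = x j & size r = j - i].
Proof.
move=> /andP[Hij Hjs].
exists (drop i (take j p)); split.
- have : path e u (take j p) by apply: take_path.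
  rewrite -{1}(cat_take_drop i (take j p)) cat_path => /andP[_].
  by rewrite /x take_takel.
- rewrite /x -(take_takel p Hij) -last_cat cat_take_drop //.
- rewrite size_drop size_takel; lia.
Qed.

End Seg.

Theorem mainTheorem12 (Sigma : seq nat) :
  delta_set Sigma ->
  (\max_(k <- Sigma) k + 2) %/ 2 <= size Sigma.
Proof.
move=> [Huq [Hne [T [e [f [_ [[Hin _ Hd] Hpr]]]]]]].
case: (max_in Sigma); set s := \max_(k <- Sigma) k => Hs.
  rewrite Hs; case: Sigma Hne {Huq Hin Hd Hpr s Hs} => //.
have [Hs0|Hs0] := eqVneq s 0.
  rewrite Hs0; case: Sigma Hne {Huq Hin Hd Hpr s Hs Hs0} => //.
have [u [v [Huv Hu Hv]]] := Hpr s Hs Hs0.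
have [[p [Hp Hl Hsz]] Hmin] := Hd u v s Huv Hu Hv.
set x := fun i => last u (take i p).
set g := fun i => f (x i).
have key : forall i j, i < j <= s -> g i = g j -> j - i = g i.
  move=> i j /andP[Hij Hjs] Hg.
  have Hxij : x i != x j.
    apply/eqP => E.
    have := @splice T e u v p s Hp Hl Hsz Hmin i j [::].
    rewrite /x in E; rewrite /= E => /(_ _ isT erefl); lia.
  have [[r [Hr Hlr Hsr]] Hrmin] := Hd (x i) (x j) (g i) Hxij erefl (esym Hg).
  have H1 := @splice T e u v p s Hp Hl Hsz Hmin i j r.
  rewrite Hsr in H1.
  have /H1 H1' : i <= j <= s by lia.
  have := H1' Hr Hlr.
  have [r' [Hr' Hlr' Hsr']] := @segment T e u p s Hp Hsz i j
     ltac:(lia).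
  have := Hrmin r' Hr' Hlr'.
  rewrite Hsr'; lia.
set b := fun i => has (fun j => g j == g i) (iota 0 i).
set h := fun i => 2 * index (g i) Sigma + b i.
have gin : forall i, g i \in Sigma by move=> i; apply: Hin.
have one : forall i j, i < j <= s -> g i = g j -> b i = b j -> False.
  move=> i j Hij Hg Hb.
  have Hbj : b j.
    apply/hasP; exists i; first by rewrite mem_iota; lia.
    by rewrite Hg.
  rewrite -Hb in Hbj.
  move/hasP: Hbj => [i' Hi' /eqP Hg'].
  rewrite mem_iota in Hi'.
  have := key i' i ltac:(lia) Hg'.
  have := key i' j ltac:(lia) (etrans Hg' Hg).
  lia.
have Huniq : uniq (map h (iota 0 s.+1)).
  rewrite map_inj_in_uniq ?iota_uniq //.
  move=> i j; rewrite !mem_iota => Hi Hj Hh.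
  have [Hidx Hb] : index (g i) Sigma = index (g j) Sigma /\ b i = b j.
    move: Hh; rewrite /h; case: (b i); case: (b j) => /=; lia.
  have Hg : g i = g j.
    by rewrite -(nth_index 0 (gin i)) -(nth_index 0 (gin j)) Hidx.
  case: (ltngtP i j) => // Hij; exfalso.
  - by apply: (one i j _ Hg Hb); lia.
  - by apply: (one j i _ (esym Hg) (esym Hb)); lia.
have := uniq_leq_size Huniq (s2 := iota 0 (2 * size Sigma)).
rewrite size_map size_iota.
have Hsub : {subset map h (iota 0 s.+1) <= iota 0 (2 * size Sigma)}.
  move=> y /mapP[i _ ->]; rewrite mem_iota /h.
  have := gin i; rewrite -index_mem.
  case: (b i) => /=; lia.
rewrite size_iota => /(_ Hsub) H.
rewrite -ltnS ltn_divLR //; lia.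
Qed.
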